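(* Consider the scalar system $\dot x=u+ax^2$, where $x,u\in\mathbb{R}$ and $a$ is an unknown constant. Let $\lambda>0$, $k>0$, $\gamma_a>0$, $\mu(t)=e^{\lambda t}$ and $s=\mu(t)x$. Apply the controller $$u=-(k+\lambda)x-\hat a x^2,\qquad \dot{\hat a}=\gamma_a\,\mu\, s\, x^2.$$ Then, for all initial conditions $x(0)$ and $\hat a(0)$: 1. $V=\tfrac12 s^2+\tfrac1{2\gamma_a}(a-\hat a)^2$ satisfies $\dot V=-ks^2$. 2. $s$, $\hat a$, $x$ and $u$ are bounded, and $|x(t)|\le C e^{-\lambda t}$ for some constant $C$ depending on the initial conditions. 3. $\lim_{t\to\infty}\hat a(t)$ exists. *)

(* Defs.v *)
From Stdlib Require Import Reals.
From Coquelicot Require Import Coquelicot.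
Open Scope R_scope.

Definition mu (lam t : R) : R := exp (lam * t).

Definition sv (lam : R) (x : R -> R) (t : R) : R := mu lam t * x t.

Definition ctrl (k lam : R) (x ah : R -> R) (t : R) : R :=
  - (k + lam) * x t - ah t * (x t) ^ 2.

Definition Vfun (a ga lam : R) (x ah : R -> R) (t : R) : R :=
  / 2 * (sv lam x t) ^ 2 + / (2 * ga) * (a - ah t) ^ 2.

Definition closed_loop_solution (a k lam ga : R) (x ah : R -> R) : Prop :=
  (forall t, 0 <= t ->
     filterlim x (within (fun r => 0 <= r) (locally t)) (locally (x t)) /\
     filterlim ah (within (fun r => 0 <= r) (locally t)) (locally (ah t))) /\
  (forall t, 0 < t ->
     derivable_pt_lim x t (ctrl k lam x ah t + a * (x t) ^ 2) /\
     derivable_pt_lim ah t (ga * mu lam t * sv lam x t * (x t) ^ 2)).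

(* Main.v *)
Require Import Defs.
From Stdlib Require Import Reals Lra FunctionalExtensionality.
From Coquelicot Require Import Coquelicot.
Open Scope R_scope.

Lemma sv_der lam x t dx : derivable_pt_lim x t dx ->
  derivable_pt_lim (sv lam x) t (lam * mu lam t * x t + mu lam t * dx).
Proof.
  intros H. apply is_derive_Reals in H. apply is_derive_Reals.
  unfold sv, mu.
  assert (He : is_derive (fun t => exp (lam * t)) t (lam * exp (lam * t))).
  { auto_derive; [exact I| ring]. }
  pose proof (is_derive_mult _ _ _ _ _ He H ltac:(intros; apply Rmult_comm)) as HM.
  simpl in HM. unfold plus, mult in HM; simpl in HM. exact HM.
Qed.

Lemma ball_R (y e z : R) : ball y e z <-> Rabs (z - y) < e.
Proof. reflexivity. Qed.

Lemma V_der (s ah : R -> R) a c t ds dah : is_derive s t ds -> is_derive ah t dah ->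
  is_derive (fun t => /2 * s t ^2 + c*(a - ah t)^2) t (s t * ds - 2*c*(a-ah t)*dah).
Proof.
  intros Hs Ha.
  auto_derive.
  - split. exists ds; exact Hs. split. exists dah; exact Ha. exact I.
  - replace (Derive (fun x => s x) t) with ds by (symmetry; now apply is_derive_unique).
    replace (Derive (fun x => ah x) t) with dah by (symmetry; now apply is_derive_unique). field.
Qed.

Lemma g_der (ah : R -> R) c lam t dah : is_derive ah t dah ->
  is_derive (fun t => ah t + c * exp (- lam * t)) t (dah - c * lam * exp (- lam * t)).
Proof.
  intros Ha.
  auto_derive.
  - exists dah; exact Ha.
  - replace (Derive (fun x => ah x) t) with dah by (symmetry; now apply is_derive_unique). ring.
Qed.

Lemma nonincr_pos (f df : R -> R) :
  (forall t, 0 < t -> derivable_pt_lim f t (df t)) -> (forall t, 0 < t -> df t <= 0) ->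
  forall t1 t2, 0 < t1 -> t1 <= t2 -> f t2 <= f t1.
Proof.
  intros Hd Hn t1 t2 h1 h12.
  destruct (Req_dec t1 t2) as [<-|hne]; [lra|].
  destruct (MVT_gen f t1 t2 df) as [c [hc Heq]].
  - intros y hy. rewrite Rmin_left in hy by lra. rewrite Rmax_right in hy by lra.
    apply is_derive_Reals, Hd; lra.
  - intros y hy. rewrite Rmin_left in hy by lra. rewrite Rmax_right in hy by lra.
    apply (derivable_continuous_pt f y (exist _ (df y) (Hd y ltac:(lra)))).
  - rewrite Rmin_left in hc by lra. rewrite Rmax_right in hc by lra.
    assert (df c <= 0) by (apply Hn; lra). nra.
Qed.

Lemma nonincr0 (f df : R -> R) :
  filterlim f (within (fun r => 0 <= r) (locally 0)) (locally (f 0)) ->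
  (forall t, 0 < t -> derivable_pt_lim f t (df t)) -> (forall t, 0 < t -> df t <= 0) ->
  forall t, 0 <= t -> f t <= f 0.
Proof.
  intros Hc Hd Hn t ht.
  destruct (Req_dec t 0) as [->|hne]; [lra|].
  assert (htp : 0 < t) by (destruct ht; [assumption|congruence]).
  destruct (Rle_or_lt (f t) (f 0)) as [|Hlt]; [assumption|exfalso].
  pose (eps := mkposreal (f t - f 0) ltac:(lra)).
  apply filterlim_locally with (eps := eps) in Hc.
  destruct Hc as [d Hdl].
  set (r := Rmin (d/2) (t/2)).
  assert (hr0 : 0 < r) by (unfold r; apply Rmin_glb_lt; destruct d; simpl; lra).
  assert (hr1 : r <= d/2) by apply Rmin_l.
  assert (hr2 : r <= t/2) by apply Rmin_r.
  assert (Hb : ball 0 d r).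
  { apply ball_R. rewrite Rminus_0_r, Rabs_pos_eq by lra. destruct d; simpl in *; lra. }
  specialize (Hdl r Hb ltac:(lra)). apply ball_R in Hdl. simpl in Hdl.
  pose proof (nonincr_pos f df Hd Hn r t hr0 ltac:(lra)).
  apply Rabs_lt_between in Hdl. unfold eps in Hdl; simpl in Hdl. unfold minus, plus, opp in Hdl; simpl in Hdl. lra.
Qed.

Lemma within_le (D : R -> Prop) (t : R) : filter_le (within D (locally t)) (locally t).
Proof. intros P HP. unfold within. apply filter_imp with P; auto. Qed.

Section FL.
Context {T : Type} {F : (T -> Prop) -> Prop} {FF : Filter F}.
Lemma fl_plus (f g : T -> R) a b : filterlim f F (locally a) -> filterlim g F (locally b) ->
  filterlim (fun t => f t + g t) F (locally (a + b)).
Proof. intros. eapply filterlim_comp_2; eauto. apply (filterlim_plus a b). Qed.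
Lemma fl_mult (f g : T -> R) a b : filterlim f F (locally a) -> filterlim g F (locally b) ->
  filterlim (fun t => f t * g t) F (locally (a * b)).
Proof. intros. eapply filterlim_comp_2; eauto. apply (filterlim_mult a b). Qed.
Lemma fl_opp (f : T -> R) a : filterlim f F (locally a) ->
  filterlim (fun t => - f t) F (locally (- a)).
Proof.
  intros H. replace (fun t => - f t) with (fun t => (-1) * f t)
    by (apply functional_extensionality; intros; ring).
  replace (- a) with (-1 * a) by ring. apply fl_mult; auto. apply filterlim_const.
Qed.
End FL.

Lemma Rabs_le_sq y : Rabs y <= 1 + y ^ 2.
Proof. unfold Rabs; destruct (Rcase_abs y); nra. Qed.

Theorem mainTheorem3 (a lam k ga : R) (x ah : R -> R) :
  0 < lam -> 0 < k -> 0 < ga ->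
  closed_loop_solution a k lam ga x ah ->
  (* 1. dV/dt = -k s^2 *)
  (forall t, 0 < t ->
     derivable_pt_lim (Vfun a ga lam x ah) t (- k * (sv lam x t) ^ 2)) /\
  (* 2. boundedness and exponential decay of x *)
  (exists M, forall t, 0 <= t ->
     Rabs (sv lam x t) <= M /\ Rabs (ah t) <= M /\ Rabs (x t) <= M /\
     Rabs (ctrl k lam x ah t) <= M) /\
  (exists C, forall t, 0 <= t -> Rabs (x t) <= C * exp (- lam * t)) /\
  (* 3. ahat converges *)
  (exists L, filterlim ah (Rbar_locally p_infty) (locally L)).
Proof.
  intros Hl Hk Hg [Hc Hd].
  assert (H1 : forall t, 0 < t ->
     derivable_pt_lim (Vfun a ga lam x ah) t (- k * (sv lam x t) ^ 2)).
  { intros t ht. destruct (Hd t ht) as [Hx Ha].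
    apply is_derive_Reals.
    pose proof (V_der (sv lam x) ah a (/(2*ga)) t _ _
                 (proj2 (is_derive_Reals _ _ _) (sv_der lam x t _ Hx))
                 (proj2 (is_derive_Reals _ _ _) Ha)) as Vd.
    match type of Vd with is_derive _ _ ?D => replace (- k * (sv lam x t) ^ 2) with D end.
    exact Vd.
    unfold sv, ctrl. field. lra. }
  assert (HV0 : filterlim (Vfun a ga lam x ah) (within (fun r => 0 <= r) (locally 0))
                  (locally (Vfun a ga lam x ah 0))).
  { destruct (Hc 0 (Rle_refl 0)) as [Cx Ca].
    assert (Ce : filterlim (fun t => exp (lam * t)) (within (fun r => 0 <= r) (locally 0))
                   (locally (exp (lam * 0)))).
    { eapply filterlim_filter_le_1. apply within_le.
      apply (ex_derive_continuous (fun t => exp (lam * t))). auto_derive. exact I. }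
    assert (Cs := fl_mult _ _ _ _ Ce Cx).
    assert (Cd := fl_plus _ _ _ _ (filterlim_const a) (fl_opp _ _ Ca)).
    assert (C := fl_plus _ _ _ _ (fl_mult _ _ _ _ (filterlim_const (/2)) (fl_mult _ _ _ _ Cs Cs))
                   (fl_mult _ _ _ _ (filterlim_const (/(2*ga))) (fl_mult _ _ _ _ Cd Cd))).
    unfold Vfun, sv, mu. simpl.
    replace (fun t => / 2 * (exp (lam * t) * x t * (exp (lam * t) * x t * 1)) +
        / (2 * ga) * ((a - ah t) * ((a - ah t) * 1)))
      with (fun t => / 2 * (exp (lam * t) * x t * (exp (lam * t) * x t)) +
        / (2 * ga) * ((a + - ah t) * (a + - ah t)))
      by (apply functional_extensionality; intros; unfold Rminus; ring).
    replace (/ 2 * (exp (lam * 0) * x 0 * (exp (lam * 0) * x 0 * 1)) +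
        / (2 * ga) * ((a - ah 0) * ((a - ah 0) * 1)))
      with (/ 2 * (exp (lam * 0) * x 0 * (exp (lam * 0) * x 0)) +
        / (2 * ga) * ((a + - ah 0) * (a + - ah 0))) by (unfold Rminus; ring).
    exact C. }
  pose (V0 := Vfun a ga lam x ah 0).
  assert (HVle : forall t, 0 <= t -> Vfun a ga lam x ah t <= V0).
  { intros t ht. apply (nonincr0 _ (fun t => - k * (sv lam x t) ^ 2) HV0 H1); auto.
    intros; nra. }
  set (S := 1 + 2 * V0).
  set (A := 1 + 2 * ga * V0 + Rabs a).
  assert (Hinvg : 0 < / (2 * ga)) by (apply Rinv_0_lt_compat; lra).
  assert (Hs : forall t, 0 <= t -> Rabs (sv lam x t) <= S).
  { intros t ht. specialize (HVle t ht). unfold Vfun in HVle.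
    pose proof (Rabs_le_sq (sv lam x t)).
    assert (0 <= / (2 * ga) * (a - ah t) ^ 2) by (apply Rmult_le_pos; [lra| apply pow2_ge_0]).
    unfold S; lra. }
  assert (Ha : forall t, 0 <= t -> Rabs (ah t) <= A).
  { intros t ht. specialize (HVle t ht). unfold Vfun in HVle.
    pose proof (Rabs_le_sq (a - ah t)).
    assert (0 <= / 2 * sv lam x t ^ 2) by (apply Rmult_le_pos; [lra| apply pow2_ge_0]).
    assert (/ (2 * ga) * (a - ah t) ^ 2 <= V0) by lra.
    assert ((a - ah t) ^ 2 <= 2 * ga * V0).
    { replace ((a - ah t) ^ 2) with ((2*ga) * (/ (2 * ga) * (a - ah t) ^ 2)) by (field; lra).
      apply Rmult_le_compat_l; lra. }
    replace (ah t) with (a - (a - ah t)) by ring.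
    pose proof (Rabs_triang a (- (a - ah t))) as Htr. rewrite Rabs_Ropp in Htr.
    unfold A. unfold Rminus at 1. lra. }
  assert (Hxe : forall t, x t = sv lam x t * exp (- lam * t)).
  { intros t. unfold sv, mu. replace (- lam * t) with (- (lam * t)) by ring.
    rewrite exp_Ropp. field. apply Rgt_not_eq, exp_pos. }
  assert (Hx : forall t, 0 <= t -> Rabs (x t) <= S * exp (- lam * t)).
  { intros t ht. rewrite Hxe, Rabs_mult, (Rabs_pos_eq (exp _)) by (apply Rlt_le, exp_pos).
    apply Rmult_le_compat_r; [apply Rlt_le, exp_pos| auto]. }
  assert (Hexp1 : forall t, 0 <= t -> exp (- lam * t) <= 1).
  { intros t ht. rewrite <- exp_0. destruct (Req_dec t 0) as [->|].
    rewrite Rmult_0_r; lra. apply Rlt_le, exp_increasing. nra. }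
  assert (HS0 : 0 <= S) by (pose proof (Hs 0 (Rle_refl 0)); pose proof (Rabs_pos (sv lam x 0)); lra).
  assert (HA0 : 0 <= A) by (pose proof (Ha 0 (Rle_refl 0)); pose proof (Rabs_pos (ah 0)); lra).
  assert (Hx' : forall t, 0 <= t -> Rabs (x t) <= S).
  { intros t ht. specialize (Hx t ht). specialize (Hexp1 t ht).
    pose proof (exp_pos (- lam * t)). nra. }
  split; [exact H1|].
  split.
  { exists (S + A + (k + lam) * S + A * S * S). intros t ht.
    pose proof (Hs t ht). pose proof (Ha t ht). pose proof (Hx' t ht).
    pose proof (Rabs_pos (x t)). pose proof (Rabs_pos (ah t)). pose proof (Rabs_pos (sv lam x t)).
    split; [nra|]. split; [nra|]. split; [nra|].
    unfold ctrl. unfold Rminus.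
    eapply Rle_trans. apply Rabs_triang.
    assert (E1 : Rabs (- (k + lam) * x t) = (k + lam) * Rabs (x t)).
    { rewrite Rabs_mult, Rabs_Ropp, Rabs_pos_eq by lra. reflexivity. }
    assert (E2 : Rabs (- (ah t * x t ^ 2)) = Rabs (ah t) * (Rabs (x t) * Rabs (x t))).
    { rewrite Rabs_Ropp, Rabs_mult, <- RPow_abs. simpl. ring. }
    rewrite E1, E2.
    assert (Rabs (x t) * Rabs (x t) <= S * S) by nra.
    assert (Rabs (ah t) * (Rabs (x t) * Rabs (x t)) <= A * (S * S)) by nra.
    nra. }
  split.
  { exists S. intros t ht. apply Hx; auto. }
  set (c := ga * S ^ 3 / lam).
  assert (Hc0 : 0 <= c) by (unfold c; apply Rmult_le_pos; [apply Rmult_le_pos; [lra| apply pow_le; lra] | apply Rlt_le, Rinv_0_lt_compat; lra]).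
  pose (g := fun t => ah t + c * exp (- lam * t)).
  assert (Hgd : forall t, 0 < t -> derivable_pt_lim g t
     (ga * mu lam t * sv lam x t * x t ^ 2 - c * lam * exp (- lam * t))).
  { intros t ht. apply is_derive_Reals. apply g_der. apply is_derive_Reals. apply (Hd t ht). }
  assert (Hgn : forall t, 0 < t -> ga * mu lam t * sv lam x t * x t ^ 2 - c * lam * exp (- lam * t) <= 0).
  { intros t ht. rewrite (Hxe t).
    assert (Em : exp (- lam * t) = / mu lam t).
    { unfold mu. replace (- lam * t) with (- (lam * t)) by ring. apply exp_Ropp. }
    rewrite Em. assert (Ep : 0 < mu lam t) by apply exp_pos.
    pose proof (Hs t (Rlt_le _ _ ht)) as Hst. set (s := sv lam x t) in *.
    replace (ga * mu lam t * s * (s * / mu lam t) ^ 2 - c * lam * / mu lam t)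
      with ((ga * / mu lam t) * (s ^ 3 - S ^ 3)) by (unfold c; field; lra).
    assert (0 < ga * / mu lam t) by (apply Rmult_lt_0_compat; [lra| apply Rinv_0_lt_compat; lra]).
    assert (s ^ 3 - S ^ 3 <= 0).
    { apply Rabs_le_between in Hst. destruct Hst.
      replace (s ^ 3 - S ^ 3) with ((s - S) * (s ^ 2 + s * S + S ^ 2)) by ring.
      assert (0 <= s ^ 2 + s * S + S ^ 2) by nra. nra. }
    nra. }
  assert (Hmono : forall t1 t2, 0 < t1 -> t1 <= t2 -> g t2 <= g t1)
    by (apply (nonincr_pos g _ Hgd Hgn)).
  assert (Hlow : forall t, 0 <= t -> - A <= g t).
  { intros t ht. unfold g. pose proof (Ha t ht). pose proof (exp_pos (- lam * t)).
    apply Rabs_le_between in H. nra. }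
  destruct (completeness (fun y => exists t, 1 <= t /\ y = - g t)) as [l [Hub Hleast]].
  { exists A. intros y [t [ht ->]]. pose proof (Hlow t ltac:(lra)). lra. }
  { exists (- g 1). exists 1. split; [lra|reflexivity]. }
  exists (- l). apply filterlim_locally. intros eps.
  assert (He2 : 0 < eps / 2) by (destruct eps; simpl; lra).
  destruct (Classical_Prop.classic (exists t0, 1 <= t0 /\ l - eps / 2 < - g t0)) as [[t0 [ht0 Hgt0]]|Hno].
  2:{ exfalso. assert (l <= l - eps / 2); [|lra].
      apply Hleast. intros y [t [ht ->]]. apply Rnot_lt_le. intros Hc'. apply Hno. exists t. split; auto. }
  exists (Rmax t0 (2 * c / (eps * lam))). intros t Ht.
  assert (Htt0 : t0 < t) by (eapply Rle_lt_trans; [apply Rmax_l| exact Ht]).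
  assert (Htc : 2 * c / (eps * lam) < t) by (eapply Rle_lt_trans; [apply Rmax_r| exact Ht]).
  apply ball_R.
  assert (G1 : g t <= g t0) by (apply Hmono; lra).
  assert (G2 : - g t <= l) by (apply Hub; exists t; split; [lra|reflexivity]).
  assert (Hlt : 0 < lam * t) by nra.
  assert (Eb : c * exp (- lam * t) < eps / 2).
  { assert (Em : exp (- lam * t) = / exp (lam * t)).
    { replace (- lam * t) with (- (lam * t)) by ring. apply exp_Ropp. }
    rewrite Em. pose proof (exp_ineq1 (lam * t) ltac:(lra)).
    assert (Hep : 0 < exp (lam * t)) by apply exp_pos.
    assert (2 * c / eps < lam * t).
    { apply (Rmult_lt_reg_r (/ lam)). apply Rinv_0_lt_compat; lra.
      replace (lam * t * / lam) with t by (field; lra).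
      replace (2 * c / eps * / lam) with (2 * c / (eps * lam)) by (field; split; lra). exact Htc. }
    assert (2 * c < eps * exp (lam * t)).
    { replace (2 * c) with ((2 * c / eps) * eps) by (field; lra). nra. }
    apply (Rmult_lt_reg_r (exp (lam * t))); [exact Hep|].
    replace (c * / exp (lam * t) * exp (lam * t)) with c by (field; lra). lra. }
  assert (0 <= c * exp (- lam * t)) by (pose proof (exp_pos (- lam * t)); nra).
  unfold g in G1, G2, Hgt0. apply Rabs_def1; lra.
Qed.
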